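(* Let $k\ge2$ be an integer, $0\le\alpha\le1$, $N\ge2$, $X\ge1$, and let $a_1,\dots,a_N$ be complex numbers. Writing $e(x)=e^{2\pi ix}$, \[ \int_X^{2X}x^\alpha\Big|\sum_{1\le n\le N}a_n\,e(k\sqrt[k]{nx})\Big|^2dx=\sum_{1\le n\le N}|a_n|^2\cdot\Big(\frac{2^{1+\alpha}-1}{1+\alpha}X^{1+\alpha}+O\big(X^{1+\alpha-\frac1k}N^{1-\frac1k}\log N\big)\Big). \]
   Context: The implied constant may depend on $k$ and $\alpha$ but not on $X$, $N$ or the $a_n$. *)

(* Defs.v *)
From Stdlib Require Import Reals.
From Coquelicot Require Export Coquelicot.
Open Scope R_scope.

Definition e_ (x : R) : C := (cos (2 * PI * x), sin (2 * PI * x)).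

Definition kroot (k : nat) (y : R) : R := Rpower y (/ INR k).

Definition expsum (k N : nat) (a : nat -> C) (x : R) : C :=
  sum_n_m (fun n => Cmult (a n) (e_ (INR k * kroot k (INR n * x)))) 1 N.

Definition l2mass (N : nat) (a : nat -> C) : R :=
  sum_n_m (fun n => (Cmod (a n)) ^ 2) 1 N.

(* Main.v *)
Require Import Defs.
From Stdlib Require Import Reals Lra Lia.
From Coquelicot Require Import Coquelicot.
Open Scope R_scope.

Lemma rp_der r x : 0 < x -> is_derive (fun y => Rpower y r) x (r * Rpower x (r - 1)).
Proof. intros H. apply is_derive_Reals. now apply derivable_pt_lim_power. Qed.
Lemma rp_ex r x : 0 < x -> ex_derive (fun y => Rpower y r) x.
Proof. intros H. eexists. now apply rp_der. Qed.
Lemma rp_D r x : 0 < x -> Derive (fun y => Rpower y r) x = r * Rpower x (r - 1).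
Proof. intros H. apply is_derive_unique. now apply rp_der. Qed.

Lemma OL (a c s al g : R) : 0 < a -> 0 < g < 1 -> 0 <= al <= 1 -> c <> 0 ->
  Rabs (RInt (fun x => Rpower x al * cos (c * Rpower x g + s)) a (2*a))
   <= 8 * Rpower a (1 + al - g) / Rabs (c*g).
Proof.
  intros Ha Hg Hal Hc.
  set (be := 1 + al - g).
  assert (Hbe : 0 < be <= 2) by (unfold be; lra).
  assert (Hcg : c * g <> 0) by (apply Rmult_integral_contrapositive; split; lra).
  set (f := fun x => Rpower x al * cos (c * Rpower x g + s)).
  set (h := fun x => / (c*g) * (be * Rpower x (be-1)) * sin (c * Rpower x g + s)).
  set (F := fun x => / (c*g) * Rpower x be * sin (c * Rpower x g + s)).
  assert (Hmin : Rmin a (2*a) = a) by (apply Rmin_left; lra).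
  assert (Hmax : Rmax a (2*a) = 2*a) by (apply Rmax_right; lra).
  assert (Hder : forall x, 0 < x -> is_derive F x (f x + h x)).
  { intros x Hx. unfold F, f, h. auto_derive.
    - repeat split; apply rp_ex; auto.
    - rewrite !rp_D by auto.
      replace (Rpower x al) with (Rpower x be * Rpower x (g - 1)).
      2:{ rewrite <- Rpower_plus. f_equal. unfold be; ring. }
      field. split; lra. }
  assert (Hcont_h : forall x, 0 < x -> continuous h x).
  { intros x Hx. apply (@ex_derive_continuous R_AbsRing R_NormedModule). unfold h. auto_derive.
    repeat split; apply rp_ex; auto. }
  assert (Hcont_fh : forall x, 0 < x -> continuous (fun x => f x + h x) x).
  { intros x Hx. apply (@ex_derive_continuous R_AbsRing R_NormedModule). unfold h, f. auto_derive.
    repeat split; apply rp_ex; auto. }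
  assert (I1 : is_RInt (fun x => f x + h x) a (2*a) (F (2*a) - F a)).
  { apply (is_RInt_derive F (fun x => f x + h x)); rewrite Hmin, Hmax; intros x Hx.
    apply Hder; lra. apply Hcont_fh; lra. }
  assert (Eh : ex_RInt h a (2*a)).
  { apply (@ex_RInt_continuous R_CompleteNormedModule). rewrite Hmin, Hmax. intros; apply Hcont_h; lra. }
  assert (Efh : ex_RInt (fun x => f x + h x) a (2*a)) by (eexists; exact I1).
  assert (Ef : RInt f a (2*a) = (F (2*a) - F a) - RInt h a (2*a)).
  { rewrite <- (is_RInt_unique _ _ _ _ I1).
    rewrite (RInt_ext f (fun x => minus (f x + h x) (h x))).
    rewrite (RInt_minus (V:=R_CompleteNormedModule)); auto.
    intros. unfold minus, plus, opp; simpl; ring. }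
  set (G := fun x => / Rabs (c*g) * Rpower x be).
  set (g0 := fun x => / Rabs (c*g) * (be * Rpower x (be - 1))).
  assert (I2 : is_RInt g0 a (2*a) (G (2*a) - G a)).
  { apply (is_RInt_derive G g0); rewrite Hmin, Hmax; intros x Hx.
    - unfold G, g0. auto_derive. apply rp_ex; lra. rewrite rp_D by lra. ring.
    - apply (@ex_derive_continuous R_AbsRing R_NormedModule). unfold g0. auto_derive. apply rp_ex; lra. }
  assert (Habsh : Rabs (RInt h a (2*a)) <= G (2*a) - G a).
  { eapply Rle_trans. apply abs_RInt_le. lra. exact Eh.
    rewrite <- (is_RInt_unique _ _ _ _ I2).
    apply RInt_le. lra.
    apply (@ex_RInt_continuous R_CompleteNormedModule). rewrite Hmin, Hmax. intros z Hz.
    apply (continuous_comp h Rabs). apply Hcont_h; lra. apply continuous_Rabs.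
    eexists; exact I2.
    intros x Hx. unfold h, g0. rewrite (Rabs_mult (/ (c*g) * _)), (Rabs_mult (/ (c*g))), Rabs_Rinv by auto.
    assert (0 < Rpower x (be-1)) by (apply exp_pos).
    rewrite (Rabs_mult be), (Rabs_pos_eq be) by lra. rewrite (Rabs_pos_eq (Rpower x (be-1))) by lra.
    assert (Hs: Rabs (sin (c * Rpower x g + s)) <= 1) by (apply Rabs_le; apply SIN_bound).
    assert (HK: 0 <= / Rabs (c*g) * (be * Rpower x (be - 1))) by (apply Rmult_le_pos; [apply Rlt_le, Rinv_0_lt_compat, Rabs_pos_lt; auto | nra]).
    set (K := / Rabs (c*g) * (be * Rpower x (be - 1))) in *.
    set (S := Rabs (sin (c * Rpower x g + s))) in *. nra. }
  assert (Pa : 0 < Rpower a be) by apply exp_pos.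
  assert (P2a : Rpower (2*a) be <= 4 * Rpower a be).
  { rewrite <- Rpower_mult_distr by lra. apply Rmult_le_compat_r. lra.
    replace 4 with (Rpower 2 (INR 2)). apply Rle_Rpower; simpl; lra.
    rewrite Rpower_pow by lra. simpl; ring. }
  assert (Hcgp : 0 < Rabs (c*g)) by (apply Rabs_pos_lt; auto).
  assert (HF : forall x, 0 < x -> Rabs (F x) <= Rpower x be / Rabs (c*g)).
  { intros x Hx. unfold F. rewrite (Rabs_mult (/ (c*g) * _)), (Rabs_mult (/ (c*g))), Rabs_Rinv by auto.
    assert (0 < Rpower x be) by apply exp_pos.
    rewrite (Rabs_pos_eq (Rpower x be)) by lra.
    assert (Rabs (sin (c * Rpower x g + s)) <= 1) by (apply Rabs_le; apply SIN_bound).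
    assert (0 < / Rabs (c*g)) by (apply Rinv_0_lt_compat; auto).
    set (S := Rabs (sin (c * Rpower x g + s))) in *. unfold Rdiv.
    set (K := / Rabs (c*g)) in *. assert (0 < K * Rpower x be) by (apply Rmult_lt_0_compat; auto). nra. }
  fold f. rewrite Ef.
  assert (Q1 := HF (2*a) ltac:(lra)). assert (Q2 := HF a Ha).
  unfold G in Habsh.
  assert (Eq : forall u, u / Rabs (c*g) = / Rabs (c*g) * u) by (intros; unfold Rdiv; ring).
  rewrite Eq in Q1, Q2 |- *.
  assert (0 < / Rabs (c*g)) by (apply Rinv_0_lt_compat; auto).
  assert (0 < Rpower (2*a) be) by apply exp_pos.
  eapply Rle_trans. apply Rabs_triang. eapply Rle_trans. apply Rplus_le_compat_r. apply Rabs_triang.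
  assert (E0 : Rabs (- F a) = Rabs (F a)) by apply Rabs_Ropp.
  assert (E1 : Rabs (- RInt h a (2*a)) = Rabs (RInt h a (2*a))) by apply Rabs_Ropp.
  assert (E2 : / Rabs (c*g) * Rpower (2*a) be <= / Rabs (c*g) * (4 * Rpower a be)) by (apply Rmult_le_compat_l; lra).
  assert (E3 : / Rabs (c*g) * (8 * Rpower a be) = 2 * (/ Rabs (c*g) * (4 * Rpower a be))) by ring.
  lra.
Qed.
Ltac tR := match goal with |- ?x = ?y => change (@eq R x y) end.

Lemma s0 (a : nat -> R) : sum_n_m a 1 0 = 0.
Proof. rewrite sum_n_m_zero; auto. Qed.
Lemma sS (a : nat -> R) N : sum_n_m a 1 (S N) = sum_n_m a 1 N + a (S N).
Proof. rewrite sum_n_Sm; [reflexivity | lia]. Qed.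

Lemma L_ext (a b : nat -> R) N : (forall i, (1 <= i <= N)%nat -> a i = b i) ->
  sum_n_m a 1 N = sum_n_m b 1 N.
Proof. induction N; intros H. rewrite !s0; auto.
  rewrite !sS, IHN by (intros; apply H; lia). rewrite (H (S N)) by lia. reflexivity. Qed.

Lemma L_le (a b : nat -> R) N : (forall i, (1 <= i <= N)%nat -> a i <= b i) ->
  sum_n_m a 1 N <= sum_n_m b 1 N.
Proof. induction N; intros H. rewrite !s0; lra.
  rewrite !sS. apply Rplus_le_compat. apply IHN; intros; apply H; lia. apply H; lia. Qed.

Lemma L_abs (a : nat -> R) N : Rabs (sum_n_m a 1 N) <= sum_n_m (fun i => Rabs (a i)) 1 N.
Proof. induction N. rewrite !s0, Rabs_R0; lra.
  rewrite !sS. eapply Rle_trans. apply Rabs_triang. lra. Qed.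

Lemma L_plus (a b : nat -> R) N : sum_n_m (fun i => a i + b i) 1 N = sum_n_m a 1 N + sum_n_m b 1 N.
Proof. induction N. rewrite !s0; lra. rewrite !sS, IHN. tR; ring. Qed.

Lemma L_scal (c : R) (a : nat -> R) N : sum_n_m (fun i => c * a i) 1 N = c * sum_n_m a 1 N.
Proof. induction N. rewrite !s0; tR; ring. rewrite !sS, IHN; tR; ring. Qed.

Lemma L_minus (a b : nat -> R) N : sum_n_m (fun i => a i - b i) 1 N = sum_n_m a 1 N - sum_n_m b 1 N.
Proof. induction N. rewrite !s0; lra. rewrite !sS, IHN; tR; ring. Qed.

Lemma L_zero (a : nat -> R) N : (forall i, (1 <= i <= N)%nat -> a i = 0) -> sum_n_m a 1 N = 0.
Proof. intros H. rewrite (L_ext a (fun _ => 0)); auto. clear H. induction N. apply s0. rewrite sS, IHN; tR; ring. Qed.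

Lemma L_delta (c : R) m N : (1 <= m <= N)%nat ->
  sum_n_m (fun n => if Nat.eq_dec n m then c else 0) 1 N = c.
Proof. induction N; intros H. lia. rewrite sS.
  destruct (Nat.eq_dec (S N) m).
  - rewrite L_zero. tR; ring. intros i Hi. destruct (Nat.eq_dec i m); auto; lia.
  - rewrite IHN by lia. tR; ring. Qed.

Lemma L_swap (f : nat -> nat -> R) M N :
  sum_n_m (fun m => sum_n_m (fun n => f m n) 1 N) 1 M = sum_n_m (fun n => sum_n_m (fun m => f m n) 1 M) 1 N.
Proof. induction M. rewrite s0. symmetry. apply L_zero. intros; apply s0.
  rewrite sS, IHM, <- L_plus. apply L_ext. intros; rewrite sS; auto. Qed.

Lemma L_prod (a b : nat -> R) N :
  sum_n_m a 1 N * sum_n_m b 1 N = sum_n_m (fun m => sum_n_m (fun n => a m * b n) 1 N) 1 N.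
Proof. transitivity (sum_n_m (fun m => sum_n_m b 1 N * a m) 1 N).
  rewrite L_scal; tR; ring.
  apply L_ext; intros. rewrite Rmult_comm, <- L_scal. apply L_ext; intros; tR; ring. Qed.

Lemma Cfst_sum (z : nat -> C) N : fst (sum_n_m z 1 N) = sum_n_m (fun n => fst (z n)) 1 N.
Proof. induction N. rewrite s0, sum_n_m_zero; auto. rewrite sS, sum_n_Sm by lia. simpl. rewrite <- IHN. reflexivity. Qed.
Lemma Csnd_sum (z : nat -> C) N : snd (sum_n_m z 1 N) = sum_n_m (fun n => snd (z n)) 1 N.
Proof. induction N. rewrite s0, sum_n_m_zero; auto. rewrite sS, sum_n_Sm by lia. simpl. rewrite <- IHN. reflexivity. Qed.

Lemma L_RInt (f : nat -> R -> R) a b N : (forall i, (1 <= i <= N)%nat -> ex_RInt (f i) a b) ->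
  is_RInt (fun x => sum_n_m (fun i => f i x) 1 N) a b (sum_n_m (fun i => RInt (f i) a b) 1 N).
Proof. induction N; intros H.
  - rewrite s0. apply (is_RInt_ext (fun _ => 0)). intros; rewrite s0; auto.
    assert (Hc := is_RInt_const (V:=R_NormedModule) a b 0). unfold scal in Hc; simpl in Hc; unfold mult in Hc; simpl in Hc. rewrite Rmult_0_r in Hc. exact Hc.
  - rewrite sS. apply (is_RInt_ext (fun x => plus (sum_n_m (fun i => f i x) 1 N) (f (S N) x))).
    intros; rewrite sS; auto.
    apply (is_RInt_plus (V:=R_NormedModule)). apply IHN. intros; apply H; lia.
    apply (RInt_correct (V:=R_CompleteNormedModule)). apply H; lia. Qed.

Lemma ln_le' x y : 0 < x -> x <= y -> ln x <= ln y.
Proof. intros. destruct (Req_dec x y). subst; lra. apply Rlt_le, ln_increasing; lra. Qed.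

Lemma ln_le_sub1 y : 0 < y -> ln y <= y - 1.
Proof. intros. pose proof (exp_ineq1_le (ln y)). rewrite exp_ln in H0; lra. Qed.

Lemma K1 j : 1 <= j -> / j <= 2 * (ln (2*j+1) - ln (2*j-1)).
Proof. intros Hj.
  assert (E : ln (2*j+1) - ln (2*j-1) = - ln ((2*j-1) / (2*j+1))).
  { unfold Rdiv. rewrite ln_mult, ln_Rinv; try lra. apply Rinv_0_lt_compat; lra. }
  rewrite E.
  assert (H := ln_le_sub1 ((2*j-1)/(2*j+1)) ltac:(apply Rdiv_lt_0_compat; lra)).
  assert (E2 : (2*j-1)/(2*j+1) - 1 = - (2 / (2*j+1))) by (field; lra).
  rewrite E2 in H.
  assert (/ j <= 2 * (2 / (2*j+1))).
  { apply Rmult_le_reg_l with (j * (2*j+1)). nra.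
    replace (j * (2*j+1) * / j) with (2*j+1) by (field; lra).
    replace (j * (2 * j + 1) * (2 * (2 / (2 * j + 1)))) with (4*j) by (field; lra). lra. }
  lra. Qed.

Definition Psi (mu t : R) : R :=
  if Rle_dec mu t then 2 * ln (2 * (t - mu) + 1) else - (2 * ln (2 * (mu - t) - 1)).

Lemma telesc (phi : R -> R) N : sum_n_m (fun n => phi (INR n) - phi (INR n - 1)) 1 N = phi (INR N) - phi 0.
Proof. induction N. rewrite s0. simpl; tR; ring. rewrite sS, IHN. rewrite S_INR. tR. 
  replace (INR N + 1 - 1) with (INR N) by ring. ring. Qed.

Definition wt (m n : nat) : R := if Nat.eq_dec n m then 0 else / Rabs (INR n - INR m).

Lemma wt_sym m n : wt m n = wt n m.
Proof. unfold wt. destruct (Nat.eq_dec n m), (Nat.eq_dec m n); try lia; auto.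
  rewrite Rabs_minus_sym; reflexivity. Qed.

Lemma wt_step m n : (1 <= n)%nat -> wt m n <= Psi (INR m) (INR n) - Psi (INR m) (INR n - 1).
Proof. intros Hn. unfold wt, Psi.
  destruct (Nat.eq_dec n m).
  - subst. destruct (Rle_dec (INR m) (INR m)); [|lra].
    destruct (Rle_dec (INR m) (INR m - 1)); [lra|].
    replace (2 * (INR m - INR m) + 1) with 1 by ring.
    replace (2 * (INR m - (INR m - 1)) - 1) with 1 by ring. rewrite ln_1. lra.
  - destruct (Nat.lt_total n m) as [Hl|[Hl|Hl]]; [|lia|].
    + assert (Hj : INR (S n) <= INR m) by (apply le_INR; lia). rewrite S_INR in Hj.
      destruct (Rle_dec (INR m) (INR n)); [lra|].
      destruct (Rle_dec (INR m) (INR n - 1)); [lra|].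
      rewrite Rabs_left by lra. replace (- (INR n - INR m)) with (INR m - INR n) by ring.
      set (j := INR m - INR n) in *.
      replace (2 * (INR m - (INR n - 1)) - 1) with (2*j+1) by (unfold j; ring).
      pose proof (K1 j ltac:(unfold j; lra)). lra.
    + assert (Hj : INR (S m) <= INR n) by (apply le_INR; lia). rewrite S_INR in Hj.
      destruct (Rle_dec (INR m) (INR n)); [|lra].
      destruct (Rle_dec (INR m) (INR n - 1)); [|lra].
      rewrite Rabs_right by lra.
      set (j := INR n - INR m) in *.
      replace (2 * (INR n - 1 - INR m) + 1) with (2*j-1) by (unfold j; ring).
      pose proof (K1 j ltac:(unfold j; lra)). lra.
Qed.

Lemma wt_sum m N : (2 <= N)%nat -> (1 <= m <= N)%nat ->
  sum_n_m (fun n => wt m n) 1 N <= 12 * ln (INR N).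
Proof. intros HN Hm.
  eapply Rle_trans. apply (L_le _ (fun n => Psi (INR m) (INR n) - Psi (INR m) (INR n - 1))).
  intros; apply wt_step; lia.
  rewrite telesc.
  assert (HmR : 1 <= INR m <= INR N) by (split; [apply (le_INR 1) | apply le_INR]; lia).
  assert (HNR : 2 <= INR N) by (apply (le_INR 2); lia).
  unfold Psi. destruct (Rle_dec (INR m) (INR N)); [|lra]. destruct (Rle_dec (INR m) 0); [lra|].
  assert (L1 : ln (2 * (INR N - INR m) + 1) <= ln (INR N ^ 3)) by (apply ln_le'; nra).
  assert (L2 : ln (2 * (INR m - 0) - 1) <= ln (INR N ^ 3)) by (apply ln_le'; nra).
  rewrite ln_pow in L1, L2 by lra. simpl INR in L1, L2. lra.
Qed.

Lemma exp_le' x y : x <= y -> exp x <= exp y.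
Proof. intros. destruct (Req_dec x y). subst; lra. apply Rlt_le, exp_increasing; lra. Qed.

Lemma dlow_lt (g : R) (m n N : nat) : 0 < g < 1 -> (1 <= n)%nat -> (n < m)%nat -> (m <= N)%nat ->
  g * (INR m - INR n) * Rpower (INR N) (g - 1) <= Rpower (INR m) g - Rpower (INR n) g.
Proof. intros Hg Hn Hnm HmN.
  assert (Hn' : 1 <= INR n) by (apply (le_INR 1); lia).
  assert (Hnm' : INR n < INR m) by (apply lt_INR; lia).
  assert (HmN' : INR m <= INR N) by (apply le_INR; lia).
  destruct (MVT_cor2 (fun y => Rpower y g) (fun y => g * Rpower y (g - 1)) (INR n) (INR m) Hnm')
    as [c [Hc1 Hc2]].
  { intros c Hc. apply derivable_pt_lim_power. lra. }
  rewrite Hc1.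
  assert (Rpower (INR N) (g - 1) <= Rpower c (g - 1)).
  { unfold Rpower. apply exp_le'. assert (ln c <= ln (INR N)) by (apply ln_le'; lra).
    assert (0 <= ln c). { rewrite <- ln_1. apply ln_le'; lra. } nra. }
  assert (0 < g * (INR m - INR n)) by nra.
  set (c' := Rpower c (g-1)) in *. set (N' := Rpower (INR N) (g - 1)) in *.
  replace (g * c' * (INR m - INR n)) with ((g * (INR m - INR n)) * c') by ring.
  apply Rmult_le_compat_l; lra.
Qed.

Lemma dlow (g : R) (m n N : nat) : 0 < g < 1 -> (1 <= n <= N)%nat -> (1 <= m <= N)%nat -> m <> n ->
  / Rabs (Rpower (INR m) g - Rpower (INR n) g) <= / g * Rpower (INR N) (1 - g) * wt m n.
Proof. intros Hg Hn Hm Hmn.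
  assert (HP : 0 < Rpower (INR N) (g-1)) by apply exp_pos.
  assert (E : Rpower (INR N) (1 - g) = / Rpower (INR N) (g-1)).
  { rewrite <- Rpower_Ropp. f_equal; ring. }
  unfold wt. destruct (Nat.eq_dec n m); [lia|].
  rewrite E.
  assert (key : forall m n, (1 <= n)%nat -> (n < m)%nat -> (m <= N)%nat ->
     / Rabs (Rpower (INR m) g - Rpower (INR n) g) <= / g * / Rpower (INR N) (g - 1) * / Rabs (INR n - INR m)).
  { intros m' n' H1 H2 H3. pose proof (dlow_lt g m' n' N Hg H1 H2 H3).
    assert (INR n' < INR m') by (apply lt_INR; lia).
    assert (0 < g * (INR m' - INR n') * Rpower (INR N) (g - 1)).
    { apply Rmult_lt_0_compat. apply Rmult_lt_0_compat; lra. auto. }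
    rewrite Rabs_right by lra. rewrite Rabs_left by lra.
    rewrite <- !Rinv_mult.
    replace (g * Rpower (INR N) (g - 1) * - (INR n' - INR m')) with (g * (INR m' - INR n') * Rpower (INR N) (g - 1)) by ring.
    apply Rinv_le_contravar; auto. }
  destruct (Nat.lt_total n m) as [H|[H|H]]; [| lia |].
  - apply key; lia.
  - rewrite Rabs_minus_sym, (Rabs_minus_sym (INR n)). apply key; lia.
Qed.

Lemma Ipow (al X : R) : 0 <= al -> 0 < X ->
  is_RInt (fun x => Rpower x al) X (2*X) ((Rpower 2 (1+al) - 1) / (1+al) * Rpower X (1+al)).
Proof. intros Hal HX.
  assert (Hmin : Rmin X (2*X) = X) by (apply Rmin_left; lra).
  assert (Hmax : Rmax X (2*X) = 2*X) by (apply Rmax_right; lra).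
  assert (H := is_RInt_derive (fun x => / (1+al) * Rpower x (1+al)) (fun x => Rpower x al) X (2*X)).
  replace ((Rpower 2 (1+al) - 1) / (1+al) * Rpower X (1+al)) with
     (minus (/ (1+al) * Rpower (2*X) (1+al)) (/ (1+al) * Rpower X (1+al))).
  apply H; rewrite Hmin, Hmax; intros x Hx.
  - auto_derive. apply rp_ex; lra. rewrite rp_D by lra.
    replace (1 + al - 1) with al by ring. field. lra.
  - apply (@ex_derive_continuous R_AbsRing R_NormedModule). apply rp_ex; lra.
  - rewrite <- Rpower_mult_distr by lra. unfold minus, plus, opp; simpl. field. lra.
Qed.

Lemma cont_trig (al g c s x : R) : 0 < x ->
  continuous (fun y => Rpower y al * cos (c * Rpower y g + s)) x.
Proof. intros Hx. apply (@ex_derive_continuous R_AbsRing R_NormedModule). auto_derive.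
  repeat split; apply rp_ex; auto. Qed.

Lemma exint_trig (al g c s X : R) : 0 < X ->
  ex_RInt (fun y => Rpower y al * cos (c * Rpower y g + s)) X (2*X).
Proof. intros HX. apply (@ex_RInt_continuous R_CompleteNormedModule).
  rewrite Rmin_left, Rmax_right by lra. intros; apply cont_trig; lra. Qed.

Lemma Cmod2 (z : C) : Cmod z ^ 2 = fst z ^ 2 + snd z ^ 2.
Proof. unfold Cmod. rewrite pow2_sqrt. auto. nra. Qed.

Definition Pc (a : nat -> C) m n := fst (a m) * fst (a n) + snd (a m) * snd (a n).
Definition Qc (a : nat -> C) m n := snd (a m) * fst (a n) - fst (a m) * snd (a n).
Definition cc (k : nat) (m n : nat) := 2 * PI * INR k * (Rpower (INR m) (/ INR k) - Rpower (INR n) (/ INR k)).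
Definition tr (al g c s x : R) := Rpower x al * cos (c * Rpower x g + s).
Definition gtm (k : nat) (al : R) (a : nat -> C) m n x :=
  Pc a m n * tr al (/ INR k) (cc k m n) 0 x - Qc a m n * tr al (/ INR k) (cc k m n) (- (PI/2)) x.

Lemma expand (k N : nat) (al : R) (a : nat -> C) (x : R) : 0 < x ->
  Rpower x al * Cmod (expsum k N a x) ^ 2 =
  sum_n_m (fun m => sum_n_m (fun n => gtm k al a m n x) 1 N) 1 N.
Proof. intros Hx. unfold expsum. rewrite Cmod2, Cfst_sum, Csnd_sum.
  cbn [pow]. rewrite !Rmult_1_r.
  rewrite !L_prod, <- L_plus, <- L_scal. apply L_ext; intros m Hm.
  rewrite <- L_plus, <- L_scal. apply L_ext; intros n Hn.
  assert (0 < INR m) by (apply lt_0_INR; lia).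
  assert (0 < INR n) by (apply lt_0_INR; lia).
  unfold gtm, tr, Pc, Qc, cc, e_, kroot.
  rewrite <- (Rpower_mult_distr (INR m)), <- (Rpower_mult_distr (INR n)) by lra.
  destruct (a m) as [p1 q1], (a n) as [p2 q2]. simpl.
  set (g := / INR k). set (rx := Rpower x g). set (rm := Rpower (INR m) g). set (rn := Rpower (INR n) g).
  set (um := 2 * PI * (INR k * (rm * rx))). set (un := 2 * PI * (INR k * (rn * rx))).
  replace (2 * PI * INR k * (rm - rn) * rx + 0) with (um - un) by (unfold um, un; ring).
  replace (2 * PI * INR k * (rm - rn) * rx + - (PI / 2)) with ((um - un) + - (PI/2)) by (unfold um, un; ring).
  rewrite cos_plus, cos_neg, sin_neg, cos_PI2, sin_PI2, cos_minus, sin_minus. ring.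
Qed.

Lemma Rpow_ne (g : R) (m n : nat) : 0 < g -> (1 <= m)%nat -> (1 <= n)%nat -> m <> n ->
  Rpower (INR m) g <> Rpower (INR n) g.
Proof. intros Hg Hm Hn Hmn E. unfold Rpower in E. apply exp_inv in E.
  assert (0 < INR m) by (apply lt_0_INR; lia). assert (0 < INR n) by (apply lt_0_INR; lia).
  assert (ln (INR m) = ln (INR n)) by (apply Rmult_eq_reg_l with g; lra).
  apply ln_inv in H1; auto. apply INR_eq in H1. auto. Qed.

Lemma ex_gt k al a m n X : 0 < X -> ex_RInt (gtm k al a m n) X (2*X).
Proof. intros HX. apply (@ex_RInt_continuous R_CompleteNormedModule).
  rewrite Rmin_left, Rmax_right by lra. intros z Hz.
  apply (@ex_derive_continuous R_AbsRing R_NormedModule). unfold gtm, tr. auto_derive.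
  repeat split; apply rp_ex; lra. Qed.

Lemma gt_is k al a m n X : 0 < X ->
  is_RInt (gtm k al a m n) X (2*X)
   (Pc a m n * RInt (tr al (/ INR k) (cc k m n) 0) X (2*X)
    - Qc a m n * RInt (tr al (/ INR k) (cc k m n) (- (PI/2))) X (2*X)).
Proof. intros HX.
  apply (is_RInt_ext (fun y => minus (scal (Pc a m n) (tr al (/ INR k) (cc k m n) 0 y))
          (scal (Qc a m n) (tr al (/ INR k) (cc k m n) (- (PI/2)) y)))).
  intros; reflexivity.
  apply (is_RInt_minus (V:=R_NormedModule)); apply (is_RInt_scal (V:=R_NormedModule));
  apply (RInt_correct (V:=R_CompleteNormedModule)); apply exint_trig; auto. Qed.

Lemma gt_diag k al a m X : 0 <= al -> 0 < X ->
  RInt (gtm k al a m m) X (2*X) = Cmod (a m) ^ 2 * ((Rpower 2 (1+al) - 1) / (1+al) * Rpower X (1+al)).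
Proof. intros Hal HX.
  rewrite (RInt_ext _ (fun x => scal (Cmod (a m) ^ 2) (Rpower x al))).
  apply is_RInt_unique. apply (is_RInt_scal (V:=R_NormedModule)). apply Ipow; auto.
  intros x _. unfold gtm, tr, cc, Pc, Qc. rewrite Cmod2. rewrite Rminus_diag.
  rewrite !Rmult_0_r, !Rmult_0_l, !Rplus_0_l, cos_0, cos_neg, cos_PI2.
  unfold scal; simpl; unfold mult; simpl. ring. Qed.

Lemma gt_off (k N : nat) al a m n X : (2 <= k)%nat -> 0 <= al <= 1 -> 0 < X ->
  (1 <= m <= N)%nat -> (1 <= n <= N)%nat -> m <> n ->
  Rabs (RInt (gtm k al a m n) X (2*X)) <=
  2 * INR k * Rpower X (1 + al - / INR k) * Rpower (INR N) (1 - / INR k)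
   * (Cmod (a m) ^ 2 + Cmod (a n) ^ 2) * wt m n.
Proof. intros Hk Hal HX Hm Hn Hmn.
  assert (HkR : 2 <= INR k) by (apply (le_INR 2); lia).
  set (g := / INR k) in *.
  assert (Hg : 0 < g < 1). { unfold g. split. apply Rinv_0_lt_compat; lra.
    apply Rmult_lt_reg_l with (INR k). lra. rewrite Rinv_r by lra. lra. }
  assert (Hkg : INR k * g = 1) by (unfold g; field; lra).
  rewrite (is_RInt_unique _ _ _ _ (gt_is k al a m n X HX)).
  set (d := Rpower (INR m) g - Rpower (INR n) g).
  assert (Hd : d <> 0) by (unfold d; intro E; apply (Rpow_ne g m n); lia || lra).
  assert (Hdp : 0 < Rabs d) by (apply Rabs_pos_lt; auto).
  assert (Hcg : Rabs (cc k m n * g) = 2 * PI * Rabs d).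
  { unfold cc. fold g. fold d. assert (E1 : 2 * PI * INR k * d * g = (2*PI) * d * (INR k * g)) by ring. rewrite E1, Hkg, Rmult_1_r.
    rewrite Rabs_mult, Rabs_right. auto. pose proof PI_RGT_0; lra. }
  assert (Hc : cc k m n <> 0).
  { intro E. rewrite E, Rmult_0_l, Rabs_R0 in Hcg. pose proof PI_RGT_0. nra. }
  set (Xb := Rpower X (1 + al - g)).
  assert (HXb : 0 < Xb) by apply exp_pos.
  set (B := 8 * Xb / Rabs (cc k m n * g)).
  assert (B0 : Rabs (RInt (tr al g (cc k m n) 0) X (2*X)) <= B) by (apply OL; auto).
  assert (B1 : Rabs (RInt (tr al g (cc k m n) (-(PI/2))) X (2*X)) <= B) by (apply OL; auto).
  assert (HA : forall z : C, Cmod z ^ 2 = fst z ^ 2 + snd z ^ 2) by apply Cmod2.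
  assert (HP : Rabs (Pc a m n) <= (Cmod (a m) ^ 2 + Cmod (a n) ^ 2) / 2).
  { rewrite !HA. unfold Pc. destruct (a m) as [p1 q1], (a n) as [p2 q2]. simpl.
    pose proof (pow2_ge_0 (p1-p2)). pose proof (pow2_ge_0 (p1+p2)).
    pose proof (pow2_ge_0 (q1-q2)). pose proof (pow2_ge_0 (q1+q2)).
    apply Rabs_le. split; nra. }
  assert (HQ : Rabs (Qc a m n) <= (Cmod (a m) ^ 2 + Cmod (a n) ^ 2) / 2).
  { rewrite !HA. unfold Qc. destruct (a m) as [p1 q1], (a n) as [p2 q2]. simpl.
    pose proof (pow2_ge_0 (q1-p2)). pose proof (pow2_ge_0 (q1+p2)).
    pose proof (pow2_ge_0 (p1-q2)). pose proof (pow2_ge_0 (p1+q2)).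
    apply Rabs_le. split; nra. }
  set (S := Cmod (a m) ^ 2 + Cmod (a n) ^ 2) in *.
  assert (step1 : Rabs (Pc a m n * RInt (tr al g (cc k m n) 0) X (2 * X) -
      Qc a m n * RInt (tr al g (cc k m n) (- (PI / 2))) X (2 * X)) <= S * B).
  { eapply Rle_trans. apply Rabs_triang. rewrite Rabs_Ropp, !Rabs_mult.
    assert (Rabs (Pc a m n) * Rabs (RInt (tr al g (cc k m n) 0) X (2 * X)) <= S/2 * B)
      by (apply Rmult_le_compat; auto using Rabs_pos).
    assert (Rabs (Qc a m n) * Rabs (RInt (tr al g (cc k m n) (-(PI/2))) X (2 * X)) <= S/2 * B)
      by (apply Rmult_le_compat; auto using Rabs_pos).
    lra. }
  eapply Rle_trans. exact step1.
  assert (HB : B <= 2 * Xb * / Rabs d).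
  { unfold B. rewrite Hcg. pose proof PI2_3_2.
    unfold Rdiv. rewrite Rinv_mult.
    assert (0 < / Rabs d) by (apply Rinv_0_lt_compat; auto).
    assert (/ (2*PI) <= 1/4). { apply Rmult_le_reg_l with (2*PI). lra. rewrite Rinv_r by lra. lra. }
    assert (0 < / (2*PI)) by (apply Rinv_0_lt_compat; lra).
    set (u := / Rabs d) in *. set (v := / (2*PI)) in *.
    replace (8 * Xb * (v * u)) with ((8 * v) * (Xb * u)) by ring.
    replace (2 * Xb * u) with (2 * (Xb * u)) by ring.
    apply Rmult_le_compat_r. apply Rmult_le_pos; lra. lra. }
  assert (Hdl := dlow g m n N Hg Hn Hm Hmn). fold d in Hdl.
  replace (/ g) with (INR k) in Hdl by (unfold g; rewrite Rinv_inv; auto).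
  assert (HS : 0 <= S) by (unfold S; nra).
  assert (0 <= wt m n) by (unfold wt; destruct Nat.eq_dec; [lra | apply Rlt_le, Rinv_0_lt_compat, Rabs_pos_lt; intro E; apply Hmn; apply INR_eq; lra]).
  eapply Rle_trans. apply Rmult_le_compat_l. auto. exact HB.
  replace (S * (2 * Xb * / Rabs d)) with ((2 * S * Xb) * / Rabs d) by ring.
  replace (2 * INR k * Xb * Rpower (INR N) (1 - g) * S * wt m n) with ((2 * S * Xb) * (INR k * Rpower (INR N) (1 - g) * wt m n)) by ring.
  apply Rmult_le_compat_l. nra. auto.
Qed.

Theorem lemma3p1 :
  forall (k : nat) (alpha : R),
    (2 <= k)%nat -> 0 <= alpha <= 1 ->
    exists Cst : R,
      forall (N : nat) (X : R) (a : nat -> C),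
        (2 <= N)%nat -> 1 <= X ->
        Rabs (RInt (fun x => Rpower x alpha * (Cmod (expsum k N a x)) ^ 2) X (2 * X)
              - l2mass N a *
                ((Rpower 2 (1 + alpha) - 1) / (1 + alpha) * Rpower X (1 + alpha)))
        <= Cst * l2mass N a
               * (Rpower X (1 + alpha - / INR k) * Rpower (INR N) (1 - / INR k) * ln (INR N)).
Proof.
  intros k al Hk Hal.
  exists (48 * INR k). intros N X a HN HX.
  assert (HX0 : 0 < X) by lra.
  assert (HkR : 2 <= INR k) by (apply (le_INR 2); lia).
  set (M := (Rpower 2 (1+al) - 1)/(1+al) * Rpower X (1+al)).
  set (Kc := 2 * INR k * Rpower X (1 + al - / INR k) * Rpower (INR N) (1 - / INR k)).
  assert (HKc : 0 <= Kc).
  { unfold Kc. assert (0 < Rpower X (1 + al - / INR k)) by apply exp_pos.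
    assert (0 < Rpower (INR N) (1 - / INR k)) by apply exp_pos.
    apply Rmult_le_pos; [|lra]. apply Rmult_le_pos; [|lra]. lra. }
  assert (E_int : RInt (fun x => Rpower x al * Cmod (expsum k N a x) ^ 2) X (2 * X) =
     sum_n_m (fun m => sum_n_m (fun n => RInt (gtm k al a m n) X (2*X)) 1 N) 1 N).
  { rewrite (RInt_ext _ (fun x => sum_n_m (fun m => sum_n_m (fun n => gtm k al a m n x) 1 N) 1 N)).
    2:{ intros x Hx. rewrite Rmin_left, Rmax_right in Hx by lra. apply expand; lra. }
    assert (Hin : forall m, (1 <= m <= N)%nat ->
       is_RInt (fun x => sum_n_m (fun n => gtm k al a m n x) 1 N) X (2*X)
         (sum_n_m (fun n => RInt (gtm k al a m n) X (2*X)) 1 N)).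
    { intros m Hm. apply L_RInt. intros; apply ex_gt; lra. }
    rewrite (is_RInt_unique _ _ _ _ (L_RInt (fun m x => sum_n_m (fun n => gtm k al a m n x) 1 N) X (2*X) N
       ltac:(intros m Hm; eexists; apply Hin; auto))).
    apply L_ext. intros m Hm. apply is_RInt_unique. apply Hin; auto. }
  assert (Emain : l2mass N a * M =
     sum_n_m (fun m => sum_n_m (fun n => if Nat.eq_dec n m then Cmod (a m) ^ 2 * M else 0) 1 N) 1 N).
  { unfold l2mass. rewrite Rmult_comm, <- L_scal. apply L_ext. intros m Hm. rewrite L_delta by lia. ring. }
  fold M. rewrite E_int, Emain, <- L_minus.
  rewrite (L_ext _ (fun m => sum_n_m (fun n => RInt (gtm k al a m n) X (2*X)
       - (if Nat.eq_dec n m then Cmod (a m) ^ 2 * M else 0)) 1 N) N).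
  2:{ intros; rewrite L_minus; reflexivity. }
  eapply Rle_trans. apply L_abs. eapply Rle_trans. apply L_le. intros m Hm. apply L_abs.
  eapply Rle_trans. apply (L_le _ (fun m => sum_n_m (fun n => Kc * (Cmod (a m) ^ 2 + Cmod (a n) ^ 2) * wt m n) 1 N)).
  { intros m Hm. apply L_le. intros n Hn.
    destruct (Nat.eq_dec n m).
    - subst. unfold wt. destruct (Nat.eq_dec m m); [|lia].
      rewrite gt_diag by lra. fold M. rewrite Rminus_diag, Rabs_R0. lra.
    - rewrite Rminus_0_r. apply gt_off; auto; lra. }
  assert (E5 : sum_n_m (fun m => sum_n_m (fun n => Kc * (Cmod (a m) ^ 2 + Cmod (a n) ^ 2) * wt m n) 1 N) 1 N
     = Kc * (sum_n_m (fun m => Cmod (a m) ^ 2 * sum_n_m (fun n => wt m n) 1 N) 1 N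
          + sum_n_m (fun n => Cmod (a n) ^ 2 * sum_n_m (fun m => wt n m) 1 N) 1 N)).
  { transitivity (Kc * sum_n_m (fun m => sum_n_m (fun n => Cmod (a m) ^ 2 * wt m n) 1 N
                     + sum_n_m (fun n => Cmod (a n) ^ 2 * wt m n) 1 N) 1 N).
    { rewrite <- L_scal. apply L_ext; intros m Hm. rewrite <- L_plus, <- L_scal. apply L_ext; intros n Hn. tR; ring. }
    rewrite L_plus. f_equal. f_equal.
    - apply L_ext; intros m Hm. apply L_scal.
    - rewrite L_swap. apply L_ext; intros n Hn. rewrite <- L_scal. apply L_ext; intros m Hm. rewrite wt_sym. reflexivity. }
  rewrite E5.
  assert (Hb : sum_n_m (fun m => Cmod (a m) ^ 2 * sum_n_m (fun n => wt m n) 1 N) 1 N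
       <= 12 * ln (INR N) * l2mass N a).
  { unfold l2mass. rewrite <- L_scal. apply L_le. intros m Hm.
    rewrite Rmult_comm. apply Rmult_le_compat_r. apply pow2_ge_0. apply wt_sum; auto. }
  assert (Hb' : sum_n_m (fun n => Cmod (a n) ^ 2 * sum_n_m (fun m => wt n m) 1 N) 1 N
       <= 12 * ln (INR N) * l2mass N a) by exact Hb.
  eapply Rle_trans. apply Rmult_le_compat_l. auto. apply Rplus_le_compat; [exact Hb | exact Hb'].
  unfold Kc. right. tR; ring.
Qed.
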